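(* Let $(W,\odot,\mathbb{1})$ be a monoid and $(M,+,\mathbb{0},\otimes)$ an $\omega$-continuous (left) $W$-module. Then for every $W$-wgcl program $C$, every state $\sigma\in\Sigma$ and every weighting $f\in\mathrm{Wt}=M^\Sigma$, $$\mathrm{wp}[\![C]\!](f)(\sigma)=\sum_{\pi\in\mathrm{TPaths}(\langle C,\sigma\rangle)}\mathrm{wgt}(\pi)\otimes f(\mathrm{last}(\pi)),$$ where $\mathrm{TPaths}(\langle C,\sigma\rangle)$ is the (countable) set of terminating computation paths starting in the configuration $\langle C,\sigma\rangle$.
   Context: A (left) module over a monoid $(W,\odot,\mathbb{1})$ is a commutative monoid $(M,+,\mathbb{0})$ with an action $\otimes\colon W\times M\to M$ such that $(v\odot w)\otimes a=v\otimes(w\otimes a)$, $v\otimes(a+b)=(v\otimes a)+(v\otimes b)$, $\mathbb{1}\otimes a=a$, $v\otimes\mathbb{0}=\mathbb{0}$. The natural order is $a\preceq b$ iff $\exists c\colon a+c=b$. $M$ is $\omega$-continuous if $\preceq$ is a partial order, every increasing $\omega$-chain has a supremum, and addition (in each argument) and each map $a\mapsto w\otimes a$ preserve such suprema. A countable sum $\sum_{i}a_i$ in $M$ is the supremum of its finite partial sums. States, programs: $\Sigma$ is the set of states (maps from variables to values); expressions $E$ evaluate to $E(\sigma)$; guards $\varphi$ are predicates on states. $W$-wgcl programs: $C::= x:=E \mid C;C \mid \mathtt{if}(\varphi)\{C\}\mathtt{else}\{C\} \mid \{C\}\oplus\{C\} \mid \mathtt{weight}\ a\ (a\in W) \mid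 \mathtt{while}(\varphi)\{C\}$. Weightings $\mathrm{Wt}=M^\Sigma$ with pointwise operations and order; $([\varphi]\cdot f)(\sigma)=f(\sigma)$ if $\sigma\models\varphi$ else $\mathbb{0}$; $f[x/E](\sigma)=f(\sigma[x\mapsto E(\sigma)])$. Weakest preweighting: $\mathrm{wp}[\![x:=E]\!](f)=f[x/E]$; $\mathrm{wp}[\![C_1;C_2]\!](f)=\mathrm{wp}[\![C_1]\!](\mathrm{wp}[\![C_2]\!](f))$; $\mathrm{wp}[\![\mathtt{if}(\varphi)\{C_1\}\mathtt{else}\{C_2\}]\!](f)=[\varphi]\cdot\mathrm{wp}[\![C_1]\!](f)+[\neg\varphi]\cdot\mathrm{wp}[\![C_2]\!](f)$; $\mathrm{wp}[\![\{C_1\}\oplus\{C_2\}]\!](f)=\mathrm{wp}[\![C_1]\!](f)+\mathrm{wp}[\![C_2]\!](f)$; $\mathrm{wp}[\![\mathtt{weight}\ a]\!](f)=a\otimes f$; $\mathrm{wp}[\![\mathtt{while}(\varphi)\{C'\}]\!](f)$ is the least fixed point of $X\mapsto[\neg\varphi]\cdot f+[\varphi]\cdot\mathrm{wp}[\![C']\!](X)$. Operational semantics: configurations are $\langle C,\sigma\rangle$ for a program $C$ and $\langle\downarrow,\sigma\rangle$ (terminated). Weighted transitions $\xrightarrow{w}$ ($w\in W$): $\langle x:=E,\sigma\rangle\xrightarrow{\mathbb 1}\langle\downarrow,\sigma[x\mapsto E(\sigma)]\rangle$; $\langle\mathtt{weight}\ a,\sigma\rangle\xrightarrow{a}\langle\downarrow,\sigma\rangle$;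 $\langle\{C_1\}\oplus\{C_2\},\sigma\rangle$ has two distinct transitions (a left and a right one, counted separately even if their targets coincide) $\xrightarrow{\mathbb 1}\langle C_1,\sigma\rangle$ and $\xrightarrow{\mathbb 1}\langle C_2,\sigma\rangle$; $\langle\mathtt{if}(\varphi)\{C_1\}\mathtt{else}\{C_2\},\sigma\rangle\xrightarrow{\mathbb 1}\langle C_1,\sigma\rangle$ if $\sigma\models\varphi$ and $\xrightarrow{\mathbb 1}\langle C_2,\sigma\rangle$ otherwise; $\langle\mathtt{while}(\varphi)\{C\},\sigma\rangle\xrightarrow{\mathbb 1}\langle C;\mathtt{while}(\varphi)\{C\},\sigma\rangle$ if $\sigma\models\varphi$ and $\xrightarrow{\mathbb 1}\langle\downarrow,\sigma\rangle$ otherwise; if $\langle C_1,\sigma\rangle\xrightarrow{w}\langle C_1',\sigma'\rangle$ then $\langle C_1;C_2,\sigma\rangle\xrightarrow{w}\langle C_1';C_2,\sigma'\rangle$, and if $\langle C_1,\sigma\rangle\xrightarrow{w}\langle\downarrow,\sigma'\rangle$ then $\langle C_1;C_2,\sigma\rangle\xrightarrow{w}\langle C_2,\sigma'\rangle$. Terminated configurations have no outgoing transitions. A computation path is a finite sequence of consecutive transitions; its weight $\mathrm{wgt}(\pi)=w_1\odot w_2\odot\cdots\odot w_n$ is the product of its transition weights in order (the empty product is $\mathbb 1$). A path is terminating if it ends in a configuration $\langle\downarrow,\tau\rangle$, and then $\mathrm{last}(\pi)=\tau$. *)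

(* Defs.v *)
From Stdlib Require Import List ClassicalEpsilon.
Import ListNotations.
Set Implicit Arguments.

Record Monoid := {
  mcar :> Type;
  mop : mcar -> mcar -> mcar;
  munit : mcar;
  mop_assoc : forall a b c, mop (mop a b) c = mop a (mop b c);
  mop_unit_l : forall a, mop munit a = a;
  mop_unit_r : forall a, mop a munit = a
}.

Record LModule (W : Monoid) := {
  car :> Type;
  add : car -> car -> car;
  zero : car;
  act : W -> car -> car;
  add_assoc : forall a b c, add (add a b) c = add a (add b c);
  add_comm : forall a b, add a b = add b a;
  add_zero_l : forall a, add zero a = a;
  act_mul : forall (v w : W) a, act (mop W v w) a = act v (act w a);
  act_add : forall (v : W) a b, act v (add a b) = add (act v a) (act v b);
  act_unit : forall a, act (munit W) a = a;
  act_zero : forall (v : W), act v zero = zero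
}.

Section Order.
Variables (W : Monoid) (M : LModule W).

Definition nle (a b : M) : Prop := exists c, add M a c = b.

Definition is_chain (u : nat -> M) : Prop := forall n, nle (u n) (u (S n)).

Definition is_lub (P : M -> Prop) (s : M) : Prop :=
  (forall m, P m -> nle m s) /\ (forall b, (forall m, P m -> nle m b) -> nle s b).

Definition is_sup (u : nat -> M) (s : M) : Prop := is_lub (fun m => exists n, m = u n) s.

Record omega_continuous : Prop := {
  nle_antisym : forall a b, nle a b -> nle b a -> a = b;
  chain_sup : forall u, is_chain u -> exists s, is_sup u s;
  add_cont_l : forall u s a, is_chain u -> is_sup u s ->
      is_sup (fun n => add M (u n) a) (add M s a);
  add_cont_r : forall u s a, is_chain u -> is_sup u s ->
      is_sup (fun n => add M a (u n)) (add M a s);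
  act_cont : forall u s (w : W), is_chain u -> is_sup u s ->
      is_sup (fun n => act M w (u n)) (act M w s)
}.
End Order.

Inductive prog (Var Val A : Type) : Type :=
| Assign : Var -> ((Var -> Val) -> Val) -> prog Var Val A
| Seq : prog Var Val A -> prog Var Val A -> prog Var Val A
| Ite : ((Var -> Val) -> bool) -> prog Var Val A -> prog Var Val A -> prog Var Val A
| Choice : prog Var Val A -> prog Var Val A -> prog Var Val A
| Weight : A -> prog Var Val A
| While : ((Var -> Val) -> bool) -> prog Var Val A -> prog Var Val A.

Inductive conf (Var Val A : Type) : Type :=
| Cfg : prog Var Val A -> (Var -> Val) -> conf Var Val A
| Term : (Var -> Val) -> conf Var Val A.

Arguments Assign {Var Val A}. Arguments Seq {Var Val A}. Arguments Ite {Var Val A}.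
Arguments Choice {Var Val A}. Arguments Weight {Var Val A}. Arguments While {Var Val A}.
Arguments Cfg {Var Val A}. Arguments Term {Var Val A}.

Section Semantics.
Variables (Var Val : Type) (Var_dec : forall x y : Var, {x = y} + {x <> y}).
Variables (W : Monoid) (M : LModule W).

Notation state := (Var -> Val).
Notation Prog := (prog Var Val W).
Notation Conf := (conf Var Val W).

Definition upd (s : state) (x : Var) (v : Val) : state :=
  fun y => if Var_dec y x then v else s y.

Definition wle (f g : state -> M) : Prop := forall s, @nle W M (f s) (g s).

(* least fixed point of Phi w.r.t. the pointwise natural order
   (chosen by Hilbert's epsilon; it exists for omega-continuous M) *)
Definition lfp (Phi : (state -> M) -> (state -> M)) : state -> M :=
  epsilon (inhabits (fun _ : state => zero M))
    (fun X => Phi X = X /\ forall Y, Phi Y = Y -> wle X Y).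

Definition guard (b : bool) (a : M) : M := if b then a else zero M.

Fixpoint wp (C : Prog) : (state -> M) -> (state -> M) :=
  match C with
  | Assign x E => fun f s => f (upd s x (E s))
  | Seq C1 C2 => fun f => wp C1 (wp C2 f)
  | Ite phi C1 C2 => fun f s =>
      add M (guard (phi s) (wp C1 f s)) (guard (negb (phi s)) (wp C2 f s))
  | Choice C1 C2 => fun f s => add M (wp C1 f s) (wp C2 f s)
  | Weight a => fun f s => act M a (f s)
  | While phi C' => fun f =>
      lfp (fun X s => add M (guard (negb (phi s)) (f s)) (guard (phi s) (wp C' X s)))
  end.

(* ----- operational semantics: list of outgoing weighted transitions
   (with multiplicity: the two branches of a choice are distinct entries) ----- *)
Fixpoint succs (C : Prog) (s : state) : list (W * Conf) :=
  match C with
  | Assign x E => [(munit W, Term (upd s x (E s)))]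
  | Weight a => [(a, Term s)]
  | Choice C1 C2 => [(munit W, Cfg C1 s); (munit W, Cfg C2 s)]
  | Ite phi C1 C2 => if phi s then [(munit W, Cfg C1 s)] else [(munit W, Cfg C2 s)]
  | While phi C' => if phi s then [(munit W, Cfg (Seq C' (While phi C')) s)]
                    else [(munit W, Term s)]
  | Seq C1 C2 =>
      map (fun p => (fst p, match snd p with
                            | Cfg C1' s' => Cfg (Seq C1' C2) s'
                            | Term s' => Cfg C2 s'
                            end)) (succs C1 s)
  end.

Definition conf_succs (c : Conf) : list (W * Conf) :=
  match c with Cfg C s => succs C s | Term _ => [] end.

(* A computation path from c is identified by the sequence of indices of the
   transitions taken; run returns the list of transition weights and the
   final configuration, or None if the sequence is not a valid path. *)
Fixpoint run (c : Conf) (ns : list nat) : option (list W * Conf) :=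
  match ns with
  | [] => Some ([], c)
  | n :: ns' =>
      match nth_error (conf_succs c) n with
      | None => None
      | Some (w, c') =>
          match run c' ns' with
          | None => None
          | Some (ws, c'') => Some (w :: ws, c'')
          end
      end
  end.

Definition wgt (ws : list W) : W := fold_right (mop W) (munit W) ws.

Definition TPath (C : Prog) (s : state) (p : list nat) : Prop :=
  exists ws t, run (Cfg C s) p = Some (ws, Term t).

Definition path_term (C : Prog) (s : state) (f : state -> M) (p : list nat) : M :=
  match run (Cfg C s) p with
  | Some (ws, Term t) => act M (wgt ws) (f t)
  | _ => zero M
  end.

Definition msum (l : list M) : M := fold_right (add M) (zero M) l.

Definition finite_partial_sum (C : Prog) (s : state) (f : state -> M) (m : M) : Prop :=
  exists l : list (list nat),
    NoDup l /\ Forall (TPath C s) l /\ m = msum (map (path_term C s f) l).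

(* the countable sum over TPaths(<C,s>): supremum of its finite partial sums *)
Definition is_path_sum (C : Prog) (s : state) (f : state -> M) (m : M) : Prop :=
  @is_lub W M (finite_partial_sum C s f) m.

End Semantics.

(* Main.v *)
Require Import Defs.
From Stdlib Require Import List Arith Lia ClassicalEpsilon FunctionalExtensionality Permutation.
Import ListNotations.
Set Implicit Arguments.

Section Proof.
Variables (W : Monoid) (M : LModule W) (HM : omega_continuous M).
Variables (Var Val : Type) (Var_dec : forall x y : Var, {x = y} + {x <> y}).

Notation state := (Var -> Val).
Notation Conf := (conf Var Val W).
Notation le := (@nle W M).

Lemma add_zero_r (a : M) : add M a (zero M) = a.
Proof. rewrite add_comm. apply add_zero_l. Qed.

Lemma le_refl a : le a a.
Proof. exists (zero M). apply add_zero_r. Qed.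

Lemma le_trans a b c : le a b -> le b c -> le a c.
Proof. intros [x Hx] [y Hy]. exists (add M x y). rewrite <- add_assoc, Hx. exact Hy. Qed.

Lemma le_zero a : le (zero M) a.
Proof. exists a. apply add_zero_l. Qed.

Lemma le_add a b c d : le a b -> le c d -> le (add M a c) (add M b d).
Proof.
  intros [x Hx] [y Hy]. exists (add M x y). subst.
  rewrite !add_assoc. f_equal. rewrite <- !add_assoc. f_equal. apply add_comm.
Qed.

Lemma le_act w a b : le a b -> le (act M w a) (act M w b).
Proof. intros [x Hx]. exists (act M w x). rewrite <- act_add, Hx. reflexivity. Qed.

Lemma le_antisym a b : le a b -> le b a -> a = b.
Proof. apply (nle_antisym HM). Qed.

Lemma sup_ub u a n : is_sup M u a -> le (u n) a.
Proof. intros [H _]. apply H. eauto. Qed.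

Lemma sup_least u a b : is_sup M u a -> (forall n, le (u n) b) -> le a b.
Proof. intros [_ H] Hb. apply H. intros m [n ->]. apply Hb. Qed.

Lemma mk_sup u a : (forall n, le (u n) a) -> (forall b, (forall n, le (u n) b) -> le a b) -> is_sup M u a.
Proof. intros H1 H2. split. - intros m [n ->]. apply H1. - intros b Hb. apply H2. intro n. apply Hb. eauto. Qed.

Lemma sup_unique u a b : is_sup M u a -> is_sup M u b -> a = b.
Proof.
  intros Ha Hb. apply le_antisym.
  - apply (sup_least Ha). intro n. apply (sup_ub n Hb).
  - apply (sup_least Hb). intro n. apply (sup_ub n Ha).
Qed.

Lemma sup_ext u v a : (forall n, u n = v n) -> is_sup M u a -> is_sup M v a.
Proof.
  intros E H. apply mk_sup.
  - intro n. rewrite <- E. apply (sup_ub n H).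
  - intros b Hb. apply (sup_least H). intro n. rewrite E. apply Hb.
Qed.

Lemma sup_const a : is_sup M (fun _ => a) a.
Proof. apply mk_sup. - intros; apply le_refl. - intros b Hb. apply (Hb 0). Qed.

Lemma sup_shift u a : le (u 0) (u 1) -> is_sup M (fun n => u (S n)) a -> is_sup M u a.
Proof.
  intros H0 H. apply mk_sup.
  - intros [|n]. + eapply le_trans. exact H0. apply (sup_ub 0 H). + apply (sup_ub n H).
  - intros b Hb. apply (sup_least H). intro n. apply Hb.
Qed.

Lemma chain_mono u : is_chain M u -> forall n m, n <= m -> le (u n) (u m).
Proof.
  intros Hc n m Hnm. induction Hnm. apply le_refl. eapply le_trans. exact IHHnm. apply Hc.
Qed.

Lemma chain_add u v : is_chain M u -> is_chain M v -> is_chain M (fun n => add M (u n) (v n)).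
Proof. intros Hu Hv n. apply le_add; auto. Qed.

Lemma sup_add u v a b : is_chain M u -> is_chain M v -> is_sup M u a -> is_sup M v b ->
  is_sup M (fun n => add M (u n) (v n)) (add M a b).
Proof.
  intros Hu Hv Ha Hb. apply mk_sup.
  - intro n. apply le_add; apply sup_ub; auto.
  - intros c Hc.
    assert (H1 : forall m, le (add M a (v m)) c).
    { intro m. apply (sup_least (add_cont_l HM (v m) Hu Ha)). intro n.
      eapply le_trans. 2: apply (Hc (Nat.max n m)).
      apply le_add; apply chain_mono; auto; lia. }
    apply (sup_least (add_cont_r HM a Hv Hb)). exact H1.
Qed.

Definition msum' := @msum W M.

Lemma le_msum {A} (F G : A -> M) L : (forall x, In x L -> le (F x) (G x)) ->
  le (msum M (map F L)) (msum M (map G L)).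
Proof.
  induction L; simpl; intros H. apply le_refl.
  apply le_add; auto.
Qed.

Lemma msum_chain {A} (F : A -> nat -> M) L : (forall x, In x L -> is_chain M (F x)) ->
  is_chain M (fun m => msum M (map (fun x => F x m) L)).
Proof. intros H m. apply le_msum. intros x Hx. apply H; auto. Qed.

Lemma msum_sup {A} (F : A -> nat -> M) (G : A -> M) L :
  (forall x, In x L -> is_chain M (F x) /\ is_sup M (F x) (G x)) ->
  is_sup M (fun m => msum M (map (fun x => F x m) L)) (msum M (map G L)).
Proof.
  induction L; simpl; intros H. apply sup_const.
  apply sup_add.
  - apply H; auto.
  - apply msum_chain. intros; apply H; auto.
  - apply H; auto.
  - apply IHL; auto.
Qed.

Lemma msum_app l1 l2 : msum M (l1 ++ l2) = add M (msum M l1) (msum M l2).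
Proof. induction l1; simpl. now rewrite add_zero_l. now rewrite IHl1, add_assoc. Qed.

Lemma msum_perm l1 l2 : Permutation l1 l2 -> msum M l1 = msum M l2.
Proof.
  induction 1; simpl; auto. now rewrite IHPermutation.
  rewrite <- !add_assoc. f_equal. apply add_comm. congruence.
Qed.

Lemma act_msum w l : act M w (msum M l) = msum M (map (act M w) l).
Proof. induction l; simpl. apply act_zero. now rewrite act_add, IHl. Qed.

Fixpoint op (n : nat) (c : Conf) (f : state -> M) : M :=
  match c with
  | Term t => f t
  | Cfg C s => match n with
               | 0 => zero M
               | S n' => msum M (map (fun p => act M (fst p) (op n' (snd p) f)) (succs Var_dec W C s))
               end
  end.

Lemma op_term n t f : op n (Term t) f = f t.
Proof. destruct n; reflexivity. Qed.

Lemma op_mono_f n c f g : (forall t, le (f t) (g t)) -> le (op n c f) (op n c g).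
Proof.
  revert c. induction n; intros [C s|t] H; simpl; auto using le_refl.
  apply le_msum. intros. apply le_act. auto.
Qed.

Lemma op_mono_S n c f : le (op n c f) (op (S n) c f).
Proof.
  revert c. induction n; intros [C s|t]; simpl; auto using le_refl, le_zero.
  apply le_msum. intros. apply le_act. auto.
Qed.

Lemma op_chain c f : is_chain M (fun n => op n c f).
Proof. intro n. apply op_mono_S. Qed.

Lemma op_mono_n n m c f : n <= m -> le (op n c f) (op m c f).
Proof. apply (chain_mono (op_chain c f)). Qed.

Lemma op_cont n c (gs : nat -> state -> M) g :
  (forall t, is_chain M (fun m => gs m t)) -> (forall t, is_sup M (fun m => gs m t) (g t)) ->
  is_chain M (fun m => op n c (gs m)) /\ is_sup M (fun m => op n c (gs m)) (op n c g).
Proof.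
  intros Hc Hs. split.
  { intro m. apply op_mono_f. intro t. apply Hc. }
  revert c. induction n; intros [C s|t]; simpl; auto using sup_const.
  apply msum_sup with (F := fun p m => act M (fst p) (op n (snd p) (gs m))).
  intros x _. split.
  - intro m. apply le_act, op_mono_f. intro t. apply Hc.
  - apply (act_cont HM). intro m. apply op_mono_f. intro t. apply Hc. apply IHn.
Qed.

Lemma op_seq1 n D E s f :
  le (op n (Cfg (Seq D E) s) f) (op n (Cfg D s) (fun s' => op n (Cfg E s') f)).
Proof.
  revert D s. induction n; intros D s. apply le_zero.
  simpl. rewrite map_map. apply le_msum. intros [w c'] _. simpl. apply le_act.
  destruct c' as [D' s'|s'].
  - eapply le_trans. apply IHn. apply op_mono_f. intro t. apply op_mono_S.
  - rewrite op_term. apply op_mono_S.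
Qed.

Lemma op_seq2 n m D E s f :
  le (op n (Cfg D s) (fun s' => op m (Cfg E s') f)) (op (n + m) (Cfg (Seq D E) s) f).
Proof.
  revert D s. induction n; intros D s. apply le_zero.
  simpl. rewrite map_map. apply le_msum. intros [w c'] _. simpl. apply le_act.
  destruct c' as [D' s'|s'].
  - apply IHn.
  - rewrite op_term. apply op_mono_n. lia.
Qed.

Lemma seq_lemma D E s f g :
  (forall h s, is_sup M (fun n => op n (Cfg D s) h) (wp Var_dec M D h s)) ->
  (forall s', is_sup M (fun m => op m (Cfg E s') f) (g s')) ->
  is_sup M (fun n => op n (Cfg (Seq D E) s) f) (wp Var_dec M D g s).
Proof.
  intros HD HE. apply mk_sup.
  - intro n. eapply le_trans. apply op_seq1. eapply le_trans.
    apply op_mono_f. intro t. apply (sup_ub n (HE t)).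
    apply (sup_ub n (HD g s)).
  - intros b Hb. apply (sup_least (HD g s)). intro n.
    destruct (@op_cont n (Cfg D s) (fun m s' => op m (Cfg E s') f) g) as [_ Hs].
    + intro t. apply op_chain.
    + exact HE.
    + apply (sup_least Hs). intro m. eapply le_trans. apply op_seq2. apply Hb.
Qed.

Lemma main_lemma C : forall s f, is_sup M (fun n => op n (Cfg C s) f) (wp Var_dec M C f s).
Proof.
  induction C as [x E|C1 IH1 C2 IH2|phi C1 IH1 C2 IH2|C1 IH1 C2 IH2|a|phi C' IH]; intros s f.
  - apply sup_shift. apply op_mono_S. simpl.
    eapply sup_ext. 2: apply sup_const. intro n. simpl. now rewrite act_unit, add_zero_r, op_term.
  - simpl. apply seq_lemma; auto.
  - apply sup_shift. apply op_mono_S. simpl. destruct (phi s); simpl.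
    + rewrite add_zero_r. eapply sup_ext. 2: apply IH1. intro n. simpl. now rewrite act_unit, add_zero_r.
    + rewrite add_zero_l. eapply sup_ext. 2: apply IH2. intro n. simpl. now rewrite act_unit, add_zero_r.
  - apply sup_shift. apply op_mono_S. simpl.
    eapply sup_ext. 2: apply sup_add; [apply op_chain|apply op_chain|apply IH1|apply IH2].
    intro n. simpl. now rewrite !act_unit, add_zero_r.
  - apply sup_shift. apply op_mono_S. simpl.
    eapply sup_ext. 2: apply sup_const. intro n. simpl. now rewrite add_zero_r, op_term.
  -
    set (Phi := fun (X : state -> M) (s : state) =>
          add M (guard M (negb (phi s)) (f s)) (guard M (phi s) (wp Var_dec M C' X s))).
    assert (Hex : forall s, exists v, is_sup M (fun n => op n (Cfg (While phi C') s) f) v).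
    { intro s0. apply (chain_sup HM). apply op_chain. }
    destruct (choice _ Hex) as [V HV].
    assert (Hfix : Phi V = V).
    { apply functional_extensionality. intro s0. unfold Phi.
      apply (sup_unique (u := fun n => op n (Cfg (While phi C') s0) f)); auto.
      apply sup_shift. apply op_mono_S. simpl. destruct (phi s0); simpl.
      - rewrite add_zero_l. eapply sup_ext. 2: apply (@seq_lemma C' (While phi C')); auto.
        intro n. simpl. now rewrite act_unit, add_zero_r.
      - rewrite add_zero_r. eapply sup_ext. 2: apply sup_const. intro n. simpl.
        now rewrite act_unit, add_zero_r, op_term. }
    assert (Hleast : forall Y, Phi Y = Y -> forall s, le (V s) (Y s)).
    { intros Y HY s0. apply (sup_least (HV s0)). intro n. revert s0. induction n; intro s0.
      apply le_zero. simpl.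
      rewrite <- HY. unfold Phi. destruct (phi s0) eqn:Hp; simpl; rewrite act_unit, add_zero_r.
      - rewrite add_zero_l. eapply le_trans. apply op_seq1. eapply le_trans.
        apply op_mono_f. apply IHn. apply (sup_ub n (IH s0 Y)).
      - rewrite op_term, add_zero_r. try apply le_refl. }
    assert (Hspec : Phi (lfp M Phi) = lfp M Phi /\ forall Y, Phi Y = Y -> wle M (lfp M Phi) Y).
    { unfold lfp. apply epsilon_spec. exists V. split; [exact Hfix|]. intros Y HY s0. apply Hleast; auto. }
    simpl. fold Phi. replace (lfp M Phi s) with (V s); auto.
    apply le_antisym. apply Hleast, Hspec. apply (proj2 Hspec V Hfix).
Qed.

Definition pt (c : Conf) (f : state -> M) (p : list nat) : M :=
  match run Var_dec W c p with
  | Some (ws, Term t) => act M (wgt W ws) (f t)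
  | _ => zero M
  end.

Fixpoint tpaths (n : nat) (c : Conf) : list (list nat) :=
  match c with
  | Term _ => [[]]
  | Cfg C s => match n with
               | 0 => []
               | S n' => flat_map (fun k => match nth_error (succs Var_dec W C s) k with
                                           | Some x => map (cons k) (tpaths n' (snd x))
                                           | None => [] end)
                                  (seq 0 (length (succs Var_dec W C s)))
               end
  end.

Lemma msum_seq {A} (L : list A) (G : A -> M) :
  msum M (map (fun k => match nth_error L k with Some x => G x | None => zero M end) (seq 0 (length L)))
  = msum M (map G L).
Proof.
  induction L; simpl; auto. f_equal. rewrite <- seq_shift, map_map. simpl. apply IHL.
Qed.

Lemma msum_flat_map {A B} (h : B -> M) (F : A -> list B) l :
  msum M (map h (flat_map F l)) = msum M (map (fun x => msum M (map h (F x))) l).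
Proof. induction l; simpl; auto. now rewrite map_app, msum_app, IHl. Qed.

Lemma pt_cons C s f k p w c' : nth_error (succs Var_dec W C s) k = Some (w, c') ->
  pt (Cfg C s) f (k :: p) = act M w (pt c' f p).
Proof.
  intro H. unfold pt. simpl. rewrite H.
  destruct (run Var_dec W c' p) as [[ws c'']|]; [destruct c''|]; simpl; auto using eq_sym, act_zero.
  apply act_mul.
Qed.

Lemma op_tpaths n c f : op n c f = msum M (map (pt c f) (tpaths n c)).
Proof.
  revert c. induction n; intros [C s|t].
  - reflexivity.
  - simpl. unfold pt. simpl. rewrite act_unit. symmetry. apply add_zero_r.
  - simpl. rewrite msum_flat_map. rewrite <- msum_seq. f_equal. apply map_ext. intro k.
    destruct (nth_error (succs Var_dec W C s) k) as [[w c']|] eqn:Hk; auto.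
    rewrite map_map. erewrite map_ext by (intro q; exact (@pt_cons C s f k q w c' Hk)).
    simpl. rewrite IHn, act_msum, map_map. reflexivity.
  - simpl. unfold pt. simpl. rewrite act_unit. symmetry. apply add_zero_r.
Qed.

Lemma tpaths_term n c p : In p (tpaths n c) -> exists ws t, run Var_dec W c p = Some (ws, Term t).
Proof.
  revert c p. induction n; intros [C s|t] p H; simpl in H.
  - contradiction.
  - destruct H as [<-|[]]. simpl. eauto.
  - apply in_flat_map in H. destruct H as [k [_ Hk]].
    destruct (nth_error (succs Var_dec W C s) k) as [[w c']|] eqn:Ek; [|contradiction].
    apply in_map_iff in Hk. destruct Hk as [p' [<- Hp']].
    destruct (IHn _ _ Hp') as [ws [t Ht]]. simpl in Ht. simpl. rewrite Ek, Ht. eauto.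
  - destruct H as [<-|[]]. simpl. eauto.
Qed.

Lemma NoDup_flat_map' {A B} (F : A -> list B) l :
  NoDup l -> (forall x, In x l -> NoDup (F x)) ->
  (forall x y p, In x l -> In y l -> In p (F x) -> In p (F y) -> x = y) -> NoDup (flat_map F l).
Proof.
  induction l as [|a l IHl]; simpl; intros Hl HF Hd. constructor.
  inversion Hl; subst. apply NoDup_app; auto.
  - apply IHl; auto. intros; eapply Hd; eauto.
  - intros p Hp Hp'. apply in_flat_map in Hp'. destruct Hp' as [y [Hy Hpy]].
    assert (a = y) by (eapply Hd; eauto). subst. contradiction.
Qed.

Lemma tpaths_nodup n c : NoDup (tpaths n c).
Proof.
  revert c. induction n; intros [C s|t]; simpl.
  - constructor.
  - repeat constructor. intros [].
  - apply NoDup_flat_map'. apply seq_NoDup.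
    + intros k _. destruct nth_error; [|constructor]. apply FinFun.Injective_map_NoDup; auto.
      intros a b E. now injection E.
    + intros x y p _ _ Hx Hy.
      destruct (nth_error _ x); [|contradiction]. destruct (nth_error _ y); [|contradiction].
      apply in_map_iff in Hx, Hy. destruct Hx as [? [<- _]]. destruct Hy as [? [E _]].
      now injection E.
  - repeat constructor. intros [].
Qed.

Lemma tpaths_complete p : forall n c ws t, run Var_dec W c p = Some (ws, Term t) ->
  length p <= n -> In p (tpaths n c).
Proof.
  induction p as [|k p IHp]; intros n c ws t H Hn.
  - simpl in H. injection H as _ Hc. subst c. destruct n; simpl; auto.
  - destruct c as [C s|t']; simpl in H; [|destruct k; discriminate].
    destruct n as [|n]; [simpl in Hn; lia|].
    destruct (nth_error (succs Var_dec W C s) k) as [[w c']|] eqn:Ek; [|discriminate].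
    destruct (run Var_dec W c' p) as [[ws' c'']|] eqn:Er; [|discriminate].
    injection H as _ ->.
    simpl. apply in_flat_map. exists k. split.
    + apply in_seq. split; [lia|]. simpl. apply nth_error_Some. congruence.
    + rewrite Ek. apply in_map. eapply IHp; eauto. simpl in Hn. lia.
Qed.

Lemma perm_sub {A} (l L : list A) : NoDup l -> incl l L -> exists L', Permutation L (l ++ L').
Proof.
  revert L. induction l as [|a l IHl]; intros L Hl Hi.
  - exists L. reflexivity.
  - inversion Hl; subst.
    destruct (in_split a L) as [L1 [L2 E]]. apply Hi; simpl; auto.
    destruct (IHl (L1 ++ L2)) as [L' HL']; auto.
    { intros x Hx. assert (Hx' : In x L) by (apply Hi; simpl; auto). subst L.
      apply in_app_or in Hx'. apply in_or_app. destruct Hx' as [?|[?|?]]; auto. subst; contradiction. }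
    exists L'. subst L. simpl. rewrite <- Permutation_middle. constructor. exact HL'.
Qed.

Lemma max_len (l : list (list nat)) p : In p l ->
  length p <= fold_right (fun q acc => Nat.max (length q) acc) 0 l.
Proof. induction l; simpl; intros H. contradiction. destruct H as [<-|H]. lia. specialize (IHl H). lia. Qed.

Lemma path_sum C s f m : is_sup M (fun n => op n (Cfg C s) f) m -> is_path_sum Var_dec M C s f m.
Proof.
  intro H. split.
  - intros x [l [Hnd [Hall ->]]].
    set (n := fold_right (fun q acc => Nat.max (length q) acc) 0 l).
    assert (Hi : incl l (tpaths n (Cfg C s))).
    { intros p Hp. rewrite Forall_forall in Hall. destruct (Hall p Hp) as [ws [t Ht]].
      eapply tpaths_complete. exact Ht. apply max_len; auto. }
    destruct (perm_sub Hnd Hi) as [L' HL'].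
    eapply le_trans. 2: apply (sup_ub n H).
    rewrite op_tpaths. rewrite (msum_perm (Permutation_map (pt (Cfg C s) f) HL')).
    rewrite map_app, msum_app. exists (msum M (map (pt (Cfg C s) f) L')). reflexivity.
  - intros b Hb. apply (sup_least H). intro n. apply Hb. exists (tpaths n (Cfg C s)).
    split; [apply tpaths_nodup|split].
    + rewrite Forall_forall. intros p Hp. exact (@tpaths_term n _ _ Hp).
    + apply op_tpaths.
Qed.
End Proof.

Theorem mainTheorem3 (W : Monoid) (M : LModule W) (HM : omega_continuous M)
  (Var Val : Type) (Var_dec : forall x y : Var, {x = y} + {x <> y})
  (C : prog Var Val W) (s : Var -> Val) (f : (Var -> Val) -> M) :
  is_path_sum Var_dec M C s f (wp Var_dec M C f s).
Proof.
  apply path_sum. apply main_lemma. exact HM.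
Qed.
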